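(* Let $\underline{T}=(T_1,\dots,T_k)$ be a tuple of contractions on a Hilbert space $\mathcal{H}$ and $q_{ij}\in\mathbb{T}$ ($1\le i<j\le k$) with $T_iT_j=q_{ij}T_jT_i$ for $i<j$, and let $u\subseteq\{1,\dots,k\}$. Then \[ S(u)=\sum_{v\subseteq u}(-1)^{|v|}(T^{e(v)})^*T^{e(v)}\ge0 \] in each of the following cases: (i) each $T_i$ is an isometry; (ii) $\|T_1\|^2+\dots+\|T_k\|^2\le1$. Here for $v=\{n_1<\dots<n_r\}$, $T^{e(v)}=T_{n_1}\cdots T_{n_r}$ and $T^{e(\emptyset)}=I$. *)

(* Defs.v *)
From HB Require Import structures.
From mathcomp Require Import all_boot all_order all_algebra.
From mathcomp Require Import complex.
From mathcomp Require Import reals.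
Set Implicit Arguments. Unset Strict Implicit. Unset Printing Implicit Defensive.
Import Order.TTheory GRing.Theory Num.Theory.
Local Open Scope ring_scope.

Section Hilbert.
Variables (R : realType) (V : lmodType R[i]).

Definition is_inner_product (ip : V -> V -> R[i]) : Prop :=
  [/\ forall (a : R[i]) x y z, ip (a *: x + y) z = a * ip x z + ip y z,
      forall x y, ip y x = Num.conj (ip x y),
      forall x, 0 <= ip x x &
      forall x, ip x x = 0 -> x = 0].

Definition hnorm (ip : V -> V -> R[i]) (x : V) : R := Num.sqrt (complex.Re (ip x x)).

Definition complete_ip (ip : V -> V -> R[i]) : Prop :=
  forall s : nat -> V,
    (forall e : R, 0 < e -> exists N, forall m n, (N <= m)%N -> (N <= n)%N ->
        hnorm ip (s m - s n) < e) ->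
    exists l : V, forall e : R, 0 < e -> exists N, forall n, (N <= n)%N ->
        hnorm ip (s n - l) < e.

Definition is_hilbert (ip : V -> V -> R[i]) : Prop :=
  is_inner_product ip /\ complete_ip ip.

Definition opnorm (ip : V -> V -> R[i]) (T : V -> V) : R :=
  reals.sup (fun r : R => exists x, hnorm ip x <= 1 /\ r = hnorm ip (T x)).

Definition is_contraction (ip : V -> V -> R[i]) (T : V -> V) := forall x, hnorm ip (T x) <= hnorm ip x.
Definition is_isometry (ip : V -> V -> R[i]) (T : V -> V) := forall x, hnorm ip (T x) = hnorm ip x.

Definition is_adjoint (ip : V -> V -> R[i]) (A B : V -> V) := forall x y, ip (A x) y = ip x (B y).

Definition positive_op (ip : V -> V -> R[i]) (S : V -> V) := forall x, 0 <= ip (S x) x.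

(* T^{e(v)} = T_{n1} ... T_{nr} for v = {n1 < ... < nr}; T^{e(emptyset)} = I *)
Definition Tpow (k : nat) (T : 'I_k -> V -> V) (v : {set 'I_k}) : V -> V :=
  foldr (fun i f => T i \o f) id (enum v).

(* S(u) = sum_{v subset u} (-1)^{|v|} (T^{e(v)})^* T^{e(v)}, where
   Ad v is the adjoint of T^{e(v)} *)
Definition Sop (k : nat) (T : 'I_k -> V -> V) (Ad : {set 'I_k} -> V -> V)
    (u : {set 'I_k}) : V -> V :=
  fun x => \sum_(v in powerset u) (-1) ^+ #|v| *: Ad v (Tpow T v x).

End Hilbert.

(* Main.v *)
Require Import Defs.
From HB Require Import structures.
From mathcomp Require Import all_boot all_order all_algebra.
From mathcomp Require Import complex.
From mathcomp Require Import reals.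
From mathcomp Require Import lra.
From mathcomp Require classical_sets.
Import Order.TTheory GRing.Theory Num.Theory.
Local Open Scope ring_scope.
Set Implicit Arguments. Unset Strict Implicit.

Section Aux.
Variables (R : realType) (V : lmodType R[i]) (ip : V -> V -> R[i]).
Hypothesis IP : is_inner_product ip.

Lemma ipZl a x z : ip (a *: x) z = a * ip x z.
Proof.
case: IP => H _ _ _.
have h0 : ip 0 z = 0.
  have h := H 1 0 0 z; rewrite scale1r addr0 mul1r in h.
  by apply: (addrI (ip 0 z)); rewrite addr0 -h.
by have := H a x 0 z; rewrite addr0 h0 addr0.
Qed.

Lemma ip0l z : ip 0 z = 0.
Proof. by rewrite -(scale0r (0 : V)) ipZl mul0r. Qed.

Lemma ipDl x y z : ip (x + y) z = ip x z + ip y z.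
Proof. by case: IP => H _ _ _; have := H 1 x y z; rewrite scale1r mul1r. Qed.

Lemma ip_suml (I : finType) (P : pred I) (f : I -> V) z :
  ip (\sum_(i | P i) f i) z = \sum_(i | P i) ip (f i) z.
Proof.
exact: (big_morph (fun x => ip x z) (fun a b => ipDl a b z) (ip0l z)).
Qed.

Definition nn y := complex.Re (ip y y).

Lemma ip_self y : ip y y = (nn y)%:C%C.
Proof.
case: IP => _ _ H _; have := H y; rewrite /nn.
case: (ip y y) => a b; rewrite lecE /= => /andP[/eqP -> _] //.
Qed.

Lemma nn_ge0 y : 0 <= nn y.
Proof. by case: IP => _ _ H _; have := H y; rewrite ip_self ler0c. Qed.

Lemma nn_eq0 y : nn y = 0 -> y = 0.
Proof. by case: IP => _ _ _ H h; apply: H; rewrite ip_self h. Qed.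


Lemma conj_realC (r : R) : Num.conj (r%:C%C) = r%:C%C.
Proof. exact: conjc_real. Qed.

Lemma ip_adj (A B : V -> V) x :
  is_adjoint ip A B -> ip (B (A x)) x = (nn (A x))%:C%C.
Proof.
move=> hA; case: IP => _ Hc _ _.
by rewrite Hc -hA ip_self conj_realC.
Qed.

Lemma nnZ (r : R) y : nn ((r%:C)%C *: y) = r ^+ 2 * nn y.
Proof.
case: IP => _ Hc _ _.
by rewrite /nn ipZl Hc ipZl ip_self -rmorphM conj_realC -rmorphM /= mulrA -expr2.
Qed.

Lemma nn0 : nn 0 = 0.
Proof. by rewrite /nn ip0l. Qed.

Lemma hnorm_sq y : hnorm ip y ^+ 2 = nn y.
Proof. by rewrite /hnorm sqr_sqrtr // nn_ge0. Qed.

Lemma hnorm_ge0 y : 0 <= hnorm ip y.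
Proof. exact: sqrtr_ge0. Qed.

Lemma opnorm_bound (T : {linear V -> V}) y :
  is_contraction ip T -> nn (T y) <= opnorm ip T ^+ 2 * nn y.
Proof.
move=> hc.
have [y0|ny0] := eqVneq (nn y) 0.
  by rewrite (nn_eq0 y0) linear0 nn0 mulr0.
have nyp : 0 < nn y by rewrite lt_neqAle eq_sym ny0 nn_ge0.
set h := hnorm ip y.
have hp : 0 < h by rewrite /h /hnorm sqrtr_gt0.
set y' := ((h^-1)%:C)%C *: y.
have ny' : nn y' = 1.
  by rewrite /y' nnZ -hnorm_sq -/h exprVn mulVf // expf_neq0 // gt_eqF.
have hy' : hnorm ip y' <= 1 by rewrite /hnorm -/(nn y') ny' sqrtr1.
have hs : classical_sets.has_sup (fun r : R => exists x, hnorm ip x <= 1 /\ r = hnorm ip (T x)).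
  split.
    exists (hnorm ip (T 0)), 0; split => //.
    by rewrite /hnorm ip0l /= sqrtr0.
  exists 1 => r [x [hx ->]].
  exact: le_trans (hc x) hx.
have := sup_upper_bound hs (ex_intro _ y' (conj hy' erefl)).
rewrite -/(opnorm ip T) => hle.
have e : nn (T y) = h ^+ 2 * nn (T y').
  by rewrite /y' linearZ nnZ mulrA -exprMn mulfV ?gt_eqF // expr1n mul1r.
rewrite e -[nn y]hnorm_sq -/h mulrC.
apply: ler_wpM2r; first exact: exprn_ge0 (ltW hp).
rewrite -hnorm_sq !expr2; apply: ler_pM => //; exact: hnorm_ge0.
Qed.

Lemma isometry_nn (T : V -> V) y : is_isometry ip T -> nn (T y) = nn y.
Proof. by move=> h; rewrite -!hnorm_sq h. Qed.

End Aux.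

Section Comb.
Variables (R : realType) (V : lmodType R[i]) (k : nat) (F : 'I_k -> V -> V).

Lemma enum_sorted (A : {set 'I_k}) : sorted (relpre val ltn) (enum A).
Proof.
rewrite -sorted_map.
rewrite -[enum _](eq_filter (mem_enum _)).
rewrite -(eq_filter (mem_map val_inj _)) -filter_map.
by rewrite (sorted_filter ltn_trans) // unlock val_ord_enum iota_ltn_sorted.
Qed.

Lemma enumU1 (a : 'I_k) (v : {set 'I_k}) :
  (forall i, i \in v -> (i < a)%N) -> enum (a |: v) = rcons (enum v) a.
Proof.
move=> hv.
apply: (irr_sorted_eq (leT := relpre val ltn)).
- by move=> x y z; apply: ltn_trans.
- by move=> x; apply: ltnn.
- exact: enum_sorted.
- have := enum_sorted v; case E: (enum v) => [|x p] //= hs.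
  rewrite rcons_path hs /=.
  apply: hv; rewrite -mem_enum E; exact: mem_last.
- by move=> i; rewrite mem_enum mem_rcons in_cons mem_enum in_setU1.
Qed.

Lemma foldr_comp (s : seq 'I_k) (h : V -> V) y :
  foldr (fun i f => F i \o f) h s y = foldr (fun i f => F i \o f) id s (h y).
Proof. by elim: s => [|i s IH] //=; rewrite IH. Qed.

Lemma TpowU1 (a : 'I_k) (v : {set 'I_k}) y :
  (forall i, i \in v -> (i < a)%N) -> Tpow F (a |: v) y = Tpow F v (F a y).
Proof. by move=> hv; rewrite /Tpow enumU1 // foldr_rcons foldr_comp. Qed.

Lemma Tpow0 y : Tpow F set0 y = y.
Proof. by rewrite /Tpow enum_set0. Qed.

Lemma sum_powersetU1 (G : {set 'I_k} -> R) (a : 'I_k) (w : {set 'I_k}) :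
  a \notin w ->
  \sum_(v in powerset (a |: w)) G v =
  \sum_(v in powerset w) G v + \sum_(v in powerset w) G (a |: v).
Proof.
move=> aw.
rewrite (bigID (fun v : {set 'I_k} => a \in v)) /= addrC; congr (_ + _).
  apply: eq_bigl => v; rewrite !powersetE.
  apply/idP/idP => [/andP[/subsetP s av]|/subsetP s].
    apply/subsetP => x xv; have := s x xv; rewrite in_setU1.
    by case/orP => // /eqP ex; rewrite -ex xv in av.
  apply/andP; split; last by apply/negP => /s; rewrite (negbTE aw).
  by apply/subsetP => x /s xw; rewrite in_setU1 xw orbT.
rewrite (reindex_onto (fun v => a |: v) (fun v => v :\ a)) /=; last first.
  by move=> v /andP[_ av]; rewrite setD1K.
apply: eq_bigl => v; rewrite !powersetE setU11 andbT.
apply/idP/idP => [/andP[s /eqP e]|s].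
  by rewrite -e -(setU1K aw); apply: setSD.
have av : a \notin v by apply/negP => /(subsetP s); rewrite (negbTE aw).
by rewrite setU1K // eqxx andbT; apply: setUS.
Qed.

Variable nn : V -> R.

Definition fS (w : {set 'I_k}) y :=
  \sum_(v in powerset w) (-1) ^+ #|v| * nn (Tpow F v y).

Lemma fS0 y : fS set0 y = nn y.
Proof. by rewrite /fS powerset0 big_set1 cards0 expr0 mul1r Tpow0. Qed.

Lemma fSU1 (a : 'I_k) (w : {set 'I_k}) y :
  a \notin w -> (forall i, i \in w -> (i < a)%N) ->
  fS (a |: w) y = fS w y - fS w (F a y).
Proof.
move=> aw hw; rewrite /fS sum_powersetU1 //; congr (_ + _).
rewrite -sumrN; apply: eq_bigr => v; rewrite powersetE => /subsetP s.
have av : a \notin v by apply/negP => /s; rewrite (negbTE aw).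
rewrite cardsU1 av add1n exprS mulN1r mulNr TpowU1 // => i /s; exact: hw.
Qed.

Lemma set_ind (Q : {set 'I_k} -> Prop) :
  Q set0 ->
  (forall (a : 'I_k) (w : {set 'I_k}), a \notin w -> (forall i, i \in w -> (i < a)%N) -> Q w -> Q (a |: w)) ->
  forall w, Q w.
Proof.
move=> Q0 QS.
suff H : forall n (w : {set 'I_k}), (forall i, i \in w -> (i < n)%N) -> Q w.
  by move=> w; apply: (H k) => i _; exact: ltn_ord.
elim=> [|n IH] w hw.
  suff -> : w = set0 by [].
  by apply/setP => i; rewrite inE; apply/negbTE/negP => /hw.
case: (pickP (fun i : 'I_k => (i \in w) && (val i == n))) => [a /andP[aw /eqP an]|hn].
  rewrite -(setD1K aw); apply: QS.
  - by rewrite setD11.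
  - move=> i; rewrite in_setD1 => /andP[ia iw]; rewrite an.
    have := hw i iw; rewrite ltnS leq_eqVlt => /orP[/eqP e|//].
    by move: ia; rewrite -val_eqE /= e an eqxx.
  - apply: IH => i; rewrite in_setD1 => /andP[ia iw].
    have := hw i iw; rewrite ltnS leq_eqVlt => /orP[/eqP e|//].
    by move: ia; rewrite -val_eqE /= e -an => /eqP [].
apply: IH => i iw; have := hw i iw; rewrite ltnS leq_eqVlt => /orP[/eqP e|//].
by move: (hn i); rewrite iw /=; case: eqP.
Qed.

End Comb.

Unset Implicit Arguments. Set Strict Implicit.

Theorem lemma4p6 (R : realType) (V : lmodType R[i]) (ip : V -> V -> R[i])
    (k : nat) (T : 'I_k -> {linear V -> V}) (q : 'I_k -> 'I_k -> R[i])
    (u : {set 'I_k}) (Ad : {set 'I_k} -> V -> V) :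
  is_hilbert ip ->
  (forall i, is_contraction ip (T i)) ->
  (forall i j : 'I_k, (i < j)%N -> `|q i j| = 1) ->
  (forall (i j : 'I_k) x, (i < j)%N -> T i (T j x) = q i j *: T j (T i x)) ->
  (forall v, is_adjoint ip (Tpow (fun i => T i : V -> V) v) (Ad v)) ->
  ((forall i, is_isometry ip (T i)) \/
   \sum_(i < k) opnorm ip (T i) ^+ 2 <= 1) ->
  positive_op ip (Sop (fun i => T i : V -> V) Ad u).
Proof.
move=> [IP _] hc _ _ hadj hcase x.
set F := (fun i => T i : V -> V).
have E : ip (Sop F Ad u x) x = ((fS F (nn ip) u x)%:C)%C.
  rewrite /Sop (ip_suml IP) rmorph_sum; apply: eq_bigr => v _.
  by rewrite (ipZl IP) (ip_adj IP _ (hadj v)) rmorphM rmorphXn rmorphN1.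
rewrite E ler0c.
case: hcase => [hiso | hsum].
  have H : forall w y, fS F (nn ip) w y = if w == set0 then nn ip y else 0.
    apply: set_ind => [y|a w aw hw IH y]; first by rewrite fS0 eqxx.
    rewrite fSU1 // !IH.
    have -> : (a |: w == set0) = false.
      by apply/negbTE/set0Pn; exists a; rewrite setU11.
    by case: (w == set0); rewrite ?(isometry_nn IP _ (hiso a)) ?subrr ?subr0.
  by rewrite H; case: ifP => _ //; exact: nn_ge0.
pose c i := opnorm ip (F i) ^+ 2.
have hb : forall w : {set 'I_k}, \sum_(i in w) c i <= 1.
  move=> w; apply: le_trans hsum.
  rewrite [X in _ <= X](bigID (fun i => i \in w)) /= lerDl.
  by apply: sumr_ge0 => i _; exact: sqr_ge0.
have H : forall (w : {set 'I_k}) y, (1 - \sum_(i in w) c i) * nn ip y <= fS F (nn ip) w y /\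
                     fS F (nn ip) w y <= nn ip y.
  apply: set_ind => [y|a w aw hw IH y].
    by rewrite fS0 big_set0 subr0 mul1r lexx.
  rewrite fSU1 // big_setU1 //=.
  have [l1 u1] := IH y; have [l2 u2] := IH (F a y).
  have ba : nn ip (F a y) <= c a * nn ip y := opnorm_bound IP y (hc a).
  have n1 := nn_ge0 IP (F a y); have hw' := hb w; have ny := nn_ge0 IP y.
  have p : 0 <= (1 - \sum_(i in w) c i) * nn ip (F a y).
    by apply: mulr_ge0 => //; rewrite subr_ge0.
  split; lra.
have [l _] := H u x; apply: le_trans l; apply: mulr_ge0; last exact: nn_ge0.
by rewrite subr_ge0.
Qed.
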